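(* Let $G$ be a cubic graph and let $Z$ be a set of $3$ vertices disjoint from $V(G)$. (i) If $G$ is $3$-edge colourable, then $\overline{K_Z}\vee G$ has a $K_3$-decomposition. (ii) If $G$ is not $3$-edge colourable, then the leave of any $K_3$-packing of $\overline{K_Z}\vee G$ contains an edge incident with a vertex in $Z$.
   Context: $\overline{K_Z}$ is the graph with vertex set $Z$ and no edges. For vertex-disjoint graphs $G,H$, $G\vee H$ has vertex set $V(G)\cup V(H)$ and edge set $E(G)\cup E(H)\cup\{xy:x\in V(G),y\in V(H)\}$. A $K_3$-decomposition of a graph is a set of triangles such that each edge lies in exactly one; a $K_3$-packing of $G$ is a $K_3$-decomposition of some subgraph $H$ of $G$, and its leave is the graph $G-H$ (vertex set $V(G)$, edge set $E(G)\setminus E(H)$). Edge colourings are proper. *)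

(* Defs.v *)
From mathcomp Require Import all_boot.
Set Implicit Arguments. Unset Strict Implicit. Unset Printing Implicit Defensive.

Definition simple_graph (V : finType) (e : rel V) : Prop :=
  (forall x, ~~ e x x) /\ (forall x y, e x y = e y x).

Definition subgraph (V : finType) (h e : rel V) : Prop :=
  simple_graph h /\ (forall x y, h x y -> e x y).

Definition cubic (V : finType) (e : rel V) : Prop :=
  forall x, #|[set y | e x y]| = 3.

Definition edge_colourable3 (V : finType) (e : rel V) : Prop :=
  exists c : V -> V -> 'I_3,
    (forall x y, e x y -> c x y = c y x) /\
    (forall x y z, e x y -> e x z -> y != z -> c x y != c x z).

Definition triangle (V : finType) (e : rel V) (t : {set V}) : bool :=
  (#|t| == 3) && [forall x in t, forall y in t, (x != y) ==> e x y].

Definition K3_decomposition (V : finType) (e : rel V) (D : {set {set V}}) : Prop :=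
  (forall t, t \in D -> triangle e t) /\
  (forall x y, e x y -> #|[set t in D | (x \in t) && (y \in t)]| = 1).

(* the join  \overline{K_Z} \vee G  with Z = 'I_3 (3 new vertices) *)
Definition join_Z3 (T : finType) (e : rel T) : rel (T + 'I_3) :=
  fun u v => match u, v with
             | inl x, inl y => e x y
             | inl _, inr _ => true
             | inr _, inl _ => true
             | inr _, inr _ => false
             end.

(* Main.v *)
Require Import Defs.
From mathcomp Require Import all_boot.
Set Implicit Arguments. Unset Strict Implicit.

Lemma card3 (V : finType) (a b c : V) : a != b -> a != c -> b != c ->
  #|[set a; b; c]| = 3.
Proof.
move=> ab ac bc; rewrite setUC cardsU1 cards2 ab !inE.
by rewrite negb_or (eq_sym c a) ac (eq_sym c b) bc.
Qed.

Lemma tri3 (V : finType) (t : {set V}) a b : #|t| = 3 -> a \in t -> b \in t -> a != b ->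
  exists w, [/\ w != a, w != b & forall u, (u \in t) = [|| u == a, u == b | u == w]].
Proof.
move=> ct at' bt ab.
have : #|t :\ a :\ b| == 1.
  move: ct; rewrite (cardsD1 a) at' (cardsD1 b (t :\ a)) !inE eq_sym ab bt /=.
  by rewrite !add1n => -[->].
move/cards1P=> -[w hw].
have wt : w \in t :\ a :\ b by rewrite hw set11.
move: (wt); rewrite !inE => /and3P[wb wa _].
exists w; split => // u.
have := congr1 (fun A : {set V} => u \in A) hw; rewrite /= !inE.
case: (u =P a) => [->|_]; first by rewrite at'.
case: (u =P b) => [->|_]; first by rewrite bt.
by move=> /= ->.
Qed.

Lemma count1 (U : finType) (P : pred U) t0 : P t0 -> (forall t, P t -> t = t0) ->
  #|[set t | P t]| = 1.
Proof.
move=> Pt0 H; apply/eqP/cards1P; exists t0; apply/setP => t; rewrite !inE.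
apply/idP/eqP => [/H //|->//].
Qed.

Lemma uniqD (V : finType) (h : rel V) D (t1 t2 : {set V}) a b :
  K3_decomposition h D -> h a b -> t1 \in D -> t2 \in D ->
  a \in t1 -> b \in t1 -> a \in t2 -> b \in t2 -> t1 = t2.
Proof.
case=> _ H hab t1D t2D a1 b1 a2 b2.
have /eqP/cards1P[t0 ht0] := H a b hab.
have : t1 \in [set t in D | (a \in t) && (b \in t)] by rewrite inE t1D a1 b1.
have : t2 \in [set t in D | (a \in t) && (b \in t)] by rewrite inE t2D a2 b2.
by rewrite ht0 !inE => /eqP -> /eqP ->.
Qed.

Lemma triE (V : finType) (h : rel V) t a b : triangle h t -> a \in t -> b \in t -> a != b -> h a b.
Proof.
case/andP=> _ /forallP H at' bt ab.
by move: (H a); rewrite at' => /forallP/(_ b); rewrite bt ab.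
Qed.

Lemma swap2 (V : finType) (a b w : V) : [set a; b; w] = [set b; a; w].
Proof. by apply/setP => u; rewrite !inE (orbC (u == a)). Qed.

Lemma part1 (T : finType) (e : rel T) : simple_graph e -> cubic e ->
  forall c : T -> T -> 'I_3,
    (forall x y, e x y -> c x y = c y x) ->
    (forall x y z, e x y -> e x z -> y != z -> c x y != c x z) ->
  exists D, K3_decomposition (join_Z3 e) D.
Proof.
case=> irr esym cu c csym cpr.
have neq x y : e x y -> x != y.
  by move=> exy; apply/eqP => exy'; move: exy; rewrite exy' (negbTE (irr y)).
have inj x y y' : e x y -> e x y' -> c x y = c x y' -> y = y'.
  move=> h1 h2 hc; apply/eqP; apply/negPn/negP => hne.
  by move: (cpr _ _ _ h1 h2 hne); rewrite hc eqxx.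
have surj x z : exists y, e x y && (c x y == z).
  have him : c x @: [set y | e x y] = [set: 'I_3].
    apply/eqP; rewrite eqEcard subsetT card_in_imset ?cu ?cardsT ?card_ord //.
    by move=> y y'; rewrite !inE => h1 h2; apply: inj.
  have : z \in c x @: [set y | e x y] by rewrite him inE.
  by case/imsetP => y; rewrite inE => exy ->; exists y; rewrite exy eqxx.
pose D := [set t : {set T + 'I_3} | [exists x, exists y,
            e x y && (t == [set inl x; inl y; inr (c x y)])]].
have DP t : t \in D -> exists x y, e x y /\ t = [set inl x; inl y; inr (c x y)].
  by rewrite inE => /existsP[x /existsP[y /andP[exy /eqP ->]]]; exists x, y.
have DI x y : e x y -> [set inl x; inl y; inr (c x y)] \in D.
  by move=> exy; rewrite inE; apply/existsP; exists x; apply/existsP; exists y; rewrite exy eqxx.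
clearbody D.
have key x z : #|[set t in D | (inl x \in t) && (inr z \in t)]| = 1.
  have [y /andP[exy /eqP cxy]] := surj x z; subst z.
  rewrite (@count1 _ _ [set inl x; inl y; inr (c x y)]) //.
    by rewrite inE DI // !inE !eqxx /=.
  move=> t /= /andP[/DP[a [b [eab ->]]]]; rewrite !inE /=.
  case/andP => /orP [/orP [/eqP [] ha | /eqP [] ha] | /eqP //] /eqP [] hz; (subst a || subst b).
    by rewrite (inj _ _ _ exy eab hz).
  have eab' : e x a by rewrite esym.
  rewrite (csym a x) // in hz; rewrite -(inj _ _ _ exy eab' hz).
  by rewrite swap2 (csym y x) // esym.
exists D; split.
  move=> t /DP[x [y [exy ->]]]; rewrite /triangle card3 ?eqxx ?neq //=.
  apply/forallP => u; apply/implyP; rewrite !inE -orbA => hu.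
  apply/forallP => v; apply/implyP; rewrite !inE -orbA => hv.
  by case/or3P: hu => /eqP ->; case/or3P: hv => /eqP -> ; rewrite ?eqxx //= ?exy ?implybT // (esym y x) exy implybT.
case=> [x|z] [y|z'] //=.
- move=> exy; apply: (@count1 _ _ [set inl x; inl y; inr (c x y)]).
    by rewrite DI // !inE !eqxx /= ?orbT.
  move=> t /andP[/DP[a [b [eab ->]]]]; rewrite !inE /=.
  case/andP => /orP [/orP [/eqP [] ha | /eqP [] ha] | /eqP //] /orP [/orP [/eqP [] hb | /eqP [] hb] | /eqP //]; subst.
  all: try by move: (neq _ _ exy); rewrite eqxx.
  all: try done.
  rewrite swap2 csym //; by rewrite esym.
all: move=> _; rewrite ?key //.
all: have E : [set t in D | (inr z \in t) && (inl y \in t)] = [set t in D | (inl y \in t) && (inr z \in t)].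
all: try (apply/setP => t; rewrite !inE; by case: (inr z \in t); case: (inl y \in t); rewrite ?andbF).
all: by rewrite E key.
Qed.

Lemma part2 (T : finType) (e : rel T) (h : rel (T + 'I_3)) D :
  simple_graph e -> cubic e ->
  subgraph h (join_Z3 e) -> K3_decomposition h D ->
  (forall z v, join_Z3 e (inr z) v -> h (inr z) v) -> edge_colourable3 e.
Proof.
case=> irr esym cu [[hirr hsym] hsub] KD hall.
have [Dtri Dcnt] := KD.
have neq x y : e x y -> x != y.
  by move=> exy; apply/eqP => exy'; move: exy; rewrite exy' (negbTE (irr y)).
have hzx x z : h (inr z) (inl x) by apply: hall.
pose R x z y := [exists t in D, [&& inr z \in t, inl x \in t & inl y \in t]].
have A x z : exists y, e x y && R x z y.
  have /eqP/cards1P[t0 ht0] := Dcnt _ _ (hzx x z).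
  have : t0 \in [set t in D | (inr z \in t) && (inl x \in t)] by rewrite ht0 set11.
  rewrite inE => /and3P[t0D zt xt].
  have /andP[/eqP c3 _] := Dtri _ t0D.
  have [w [wz wx wt]] := tri3 c3 zt xt isT.
  have wt' : w \in t0 by rewrite wt eqxx !orbT.
  have := hsub _ _ (triE (Dtri _ t0D) zt wt' (ltac:(by rewrite eq_sym))).
  case: w wz wx wt wt' => // y _ wx wt yt _.
  have := hsub _ _ (triE (Dtri _ t0D) xt yt (ltac:(by rewrite eq_sym))) => /= exy.
  exists y; rewrite exy /=; apply/existsP; exists t0; by rewrite t0D zt xt yt.
have RP x z y : R x z y -> exists t, [/\ t \in D, inr z \in t, inl x \in t & inl y \in t].
  by case/existsP => t /and4P[tD zt xt yt]; exists t.
have B x y z z' : e x y -> R x z y -> R x z' y -> z = z'.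
  move=> exy /RP[t [tD zt xt yt]] /RP[t' [tD' zt' xt' yt']].
  have xy : inl x != inl y :> (T + 'I_3) by have := neq _ _ exy.
  have htt := uniqD KD (triE (Dtri _ tD) xt yt xy) tD tD' xt yt xt' yt'.
  subst t'.
  have /andP[/eqP c3 _] := Dtri _ tD.
  have [w [wx wy wt]] := tri3 c3 xt yt xy.
  by move: zt zt'; rewrite !wt /= => /eqP <- /eqP [].
have C x y y' z : R x z y -> R x z y' -> e x y -> e x y' -> y = y'.
  move=> /RP[t [tD zt xt yt]] /RP[t' [tD' zt' xt' yt']] exy exy'.
  have htt := uniqD KD (hzx x z) tD tD' zt xt zt' xt'.
  subst t'.
  have /andP[/eqP c3 _] := Dtri _ tD.
  have [w [wx wy wt]] := tri3 c3 zt xt isT.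
  move: yt yt'; rewrite !wt /=.
  case/orP => [/eqP [] yx | /eqP hy]; first by move: (neq _ _ exy); rewrite yx eqxx.
  case/orP => [/eqP [] yx | /eqP hy']; first by move: (neq _ _ exy'); rewrite yx eqxx.
  by move: hy; rewrite -hy' => -[].
have Sj x y : e x y -> exists z, R x z y.
  move=> exy.
  pose f z := odflt x [pick y | e x y && R x z y].
  have fP z : e x (f z) && R x z (f z).
    rewrite /f; case: pickP => //= H; have [y' Hy'] := A x z.
    by move: (H y'); rewrite Hy'.
  have finj : injective f.
    move=> z z' fz; have /andP[e1 r1] := fP z; have /andP[_ r2] := fP z'.
    by rewrite -fz in r2; apply: B e1 r1 r2.
  have him : f @: [set: 'I_3] = [set y | e x y].
    apply/eqP; rewrite eqEcard card_imset // cardsT card_ord cu leqnn andbT.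
    by apply/subsetP => y0 /imsetP[z _ ->]; rewrite inE; case/andP: (fP z).
  have : y \in f @: [set: 'I_3] by rewrite him inE.
  by case/imsetP => z _ ->; exists z; case/andP: (fP z).
have Rsym x y z : R x z y = R y z x.
  by apply/existsP/existsP => -[t /and4P[tD zt xt yt]]; exists t; rewrite tD zt xt yt.
pose c x y := odflt ord0 [pick z | R x z y].
have cP x y : e x y -> R x (c x y) y.
  move=> exy; rewrite /c; case: pickP => //= H; have [z Hz] := Sj _ _ exy.
  by move: (H z); rewrite Hz.
exists c; split.
  move=> x y exy; rewrite /c; congr odflt; apply: eq_pick => z; exact: Rsym.
move=> x y y' exy exy' yy'; apply/eqP => hc.
have r1 := cP _ _ exy; have r2 := cP _ _ exy'; rewrite -hc in r2.
by move: yy'; rewrite (C _ _ _ _ r1 r2 exy exy') eqxx.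
Qed.

Theorem lemma5 (T : finType) (e : rel T) :
  simple_graph e -> cubic e ->
  (edge_colourable3 e -> exists D, K3_decomposition (join_Z3 e) D) /\
  (~ edge_colourable3 e ->
     forall (h : rel (T + 'I_3)) (D : {set {set (T + 'I_3)}}),
       subgraph h (join_Z3 e) -> K3_decomposition h D ->
       exists (z : 'I_3) (v : T + 'I_3),
         join_Z3 e (inr z) v && ~~ h (inr z) v).
Proof.
move=> sg cu; split.
  by case=> c [cs cp]; apply: (part1 sg cu cs cp).
move=> nc h D sh KD.
case: (boolP [exists z, exists v, join_Z3 e (inr z) v && ~~ h (inr z) v]).
  by case/existsP => z /existsP[v H]; exists z, v.
move=> H; exfalso; apply: nc; apply: (part2 sg cu sh KD) => z v jv.
apply/negPn/negP => nh; move/negP: H; apply; apply/existsP; exists z.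
by apply/existsP; exists v; rewrite jv nh.
Qed.
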